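(* Let $d\ge4$ be even, $\mathcal{C}\in(\mathbb{R}^2)^{\otimes d}$ the symmetric tensor of $x^d-3y^d$, and $\mathcal{M}=\{x^{d-2}y,x^{d-3}y^2,\dots,xy^{d-2}\}\subset(\mathbb{R}^2)^{\otimes(d-1)}$. Let $E=\{1,\dots,n\}$, $\mathcal{E}=\{n+1,\dots,2n\}$ and let $\mathcal{W}\subset(\mathbb{R}^{E\cup\mathcal{E}})^{\otimes(d-1)}$ be a finite set of tensors such that: (3) $\operatorname{Span}\mathcal{W}$ contains the $n$ clone of every tensor in $\mathcal{M}$; (4e) $\mathbb{I}(E,d)$ is the only decomposable tensor in $\mathbb{I}(E,d)\bmod\mathcal{W}_E$; (4$\epsilon$) $\mathbb{I}(\mathcal{E},d)$ is the only decomposable tensor in $\mathbb{I}(\mathcal{E},d)\bmod\mathcal{W}_{\mathcal{E}}$. Then $\operatorname{minrk}(\mathcal{C}_c\bmod\mathcal{W})<\operatorname{minsrk}(\mathcal{C}_c\bmod\mathcal{W})$, where $\mathcal{C}_c$ is the $n$ clone of $\mathcal{C}$.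
   Context: All tensors are real. Symmetric tensors correspond to forms via $\mathcal{T}\leftrightarrow\sum_k\mathcal{T}(k_1|\dots|k_m)x_{k_1}\cdots x_{k_m}$ (with $x_1=x,x_2=y$ for binary forms). Clone: for $\mathcal{U}\in(\mathbb{R}^2)^{\otimes m}$, its $n$ clone $\mathcal{U}_c\in(\mathbb{R}^{E\cup\mathcal{E}})^{\otimes m}$ has entries $\mathcal{U}_c(k_1|\dots|k_m)=\mathcal{U}(h_1|\dots|h_m)$, where $h_i=1$ if $k_i\in E$ and $h_i=2$ if $k_i\in\mathcal{E}$. For a tensor (or set of tensors) on index set $E\cup\mathcal{E}$, the subscript $E$ (resp. $\mathcal{E}$) denotes restriction of each index to $E$ (resp. $\mathcal{E}$). $\mathbb{I}(E,d)\in(\mathbb{R}^E)^{\otimes d}$ is the all-ones tensor, similarly $\mathbb{I}(\mathcal{E},d)$. For $\mathcal{C}\in(\mathbb{R}^I)^{\otimes d}$ and finite $\mathcal{W}\subset(\mathbb{R}^I)^{\otimes(d-1)}$, $\mathcal{C}\bmod\mathcal{W}$ is the set of tensors with entries $\mathcal{C}(k_1|\dots|k_d)+\sum_{j=1}^dM_j^{(k_j)}(k_1|\dots|\widehat{k_j}|\dots|k_d)$ with arbitrary $M_j^{(k_j)}\in\operatorname{Span}\mathcal{W}$ chosen independently for each $j$ and each $k_j\in I$. $\operatorname{minrk}\mathcal{A}$ is the minimal rank (number of decomposable summands $v_1\otimes\cdots\otimes v_d$) of a tensor in $\mathcal{A}$; $\operatorname{minsrk}\mathcal{A}$ is the minimal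 symmetric rank (number of summands $\lambda v^{\otimes d}$) of a symmetric tensor in $\mathcal{A}$. *)

(* Defs.v *)
From HB Require Import structures.
From mathcomp Require Import all_boot all_order all_algebra all_fingroup.
From mathcomp Require Import zify.
From mathcomp Require Import reals.
Set Implicit Arguments. Unset Strict Implicit. Unset Printing Implicit Defensive.
Import Order.TTheory GRing.Theory Num.Theory.
Local Open Scope ring_scope.

Section Tensors.
Variable R : realType.

(* A tensor of order m on the index set 'I_k (i.e. an element of
   (R^k)^{\otimes m}): a function of the multi-index (k_1|...|k_m). *)
Definition tensor (k m : nat) := {ffun 'I_m -> 'I_k} -> R.

Definition ones (k m : nat) : tensor k m := fun _ => 1.

Definition decomposable k m (T : tensor k m) : Prop :=
  exists v : 'I_m -> 'I_k -> R, T = fun t => \prod_(i < m) v i (t i).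

Definition rank_le k m (T : tensor k m) (r : nat) : Prop :=
  exists v : 'I_r -> 'I_m -> 'I_k -> R,
    T = fun t => \sum_(j < r) \prod_(i < m) v j i (t i).

Definition symmetric k m (T : tensor k m) : Prop :=
  forall (s : 'S_m) (t : {ffun 'I_m -> 'I_k}), T [ffun i => t (s i)] = T t.

Definition srank_le k m (T : tensor k m) (r : nat) : Prop :=
  exists (lam : 'I_r -> R) (v : 'I_r -> 'I_k -> R),
    T = fun t => \sum_(j < r) lam j * \prod_(i < m) v j (t i).

Definition is_minrk k m (A : tensor k m -> Prop) (r : nat) : Prop :=
  (exists T, A T /\ rank_le T r) /\
  (forall T s, A T -> rank_le T s -> (r <= s)%N).

Definition is_minsrk k m (A : tensor k m -> Prop) (r : nat) : Prop :=
  (exists T, A T /\ symmetric T /\ srank_le T r) /\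
  (forall T s, A T -> symmetric T -> srank_le T s -> (r <= s)%N).

Definition in_span k m (W : seq (tensor k m)) (T : tensor k m) : Prop :=
  exists c : 'I_(size W) -> R,
    T = fun t => \sum_(i < size W) c i * nth (fun _ => 0) W i t.

Lemma skip_proof d (j : 'I_d) (i : 'I_d.-1) : (bump j i < d)%N.
Proof. move: (ltn_ord i) (ltn_ord j); rewrite /bump; case: (j <= i)%N => /=; lia. Qed.

Definition skip d (j : 'I_d) (i : 'I_d.-1) : 'I_d := Ordinal (skip_proof j i).

Definition drop_idx k d (t : {ffun 'I_d -> 'I_k}) (j : 'I_d) : {ffun 'I_d.-1 -> 'I_k} :=
  [ffun i => t (skip j i)].

Definition in_mod k d (C : tensor k d) (W : seq (tensor k d.-1)) (T : tensor k d) : Prop :=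
  exists M : 'I_d -> 'I_k -> tensor k d.-1,
    (forall j a, in_span W (M j a)) /\
    T = fun t => C t + \sum_(j < d) M j (t j) (drop_idx t j).

(* Symmetric tensor of the binary form sum_j c j x^(m-j) y^j
   (index ord0 <-> x, index ord_max = 1 <-> y). *)
Definition binform (m : nat) (c : nat -> R) : tensor 2 m :=
  fun t => let j := #|[pred i | t i == ord_max]| in c j / ('C(m, j))%:R.

(* E = first n indices, script-E = last n indices of 'I_(n+n). *)
Definition blk n (i : 'I_(n + n)) : 'I_2 := if (i < n)%N then ord0 else ord_max.

Definition clone n m (U : tensor 2 m) : tensor (n + n) m :=
  fun t => U [ffun i => blk (t i)].

Definition restrE n m (T : tensor (n + n) m) : tensor n m :=
  fun t => T [ffun i => lshift n (t i)].
Definition restrEE n m (T : tensor (n + n) m) : tensor n m :=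
  fun t => T [ffun i => rshift n (t i)].

End Tensors.

Arguments clone {R} n {m} U _.
Arguments binform {R} m c _.
Arguments ones {R} k m _.
Arguments restrE {R n m} T _.
Arguments restrEE {R n m} T _.

(* Main.v *)
Require Import Defs.
From HB Require Import structures.
From mathcomp Require Import all_boot all_order all_algebra all_fingroup.
From mathcomp Require Import reals.
From mathcomp Require Import zify ring lra.
From Stdlib Require Import FunctionalExtensionality.
Set Warnings "-all".
Import Order.TTheory GRing.Theory Num.Theory.
Local Open Scope ring_scope.

Set Implicit Arguments. Unset Strict Implicit.
Section H.
Variable R : realType.

Lemma in_span_sum k m (W : seq (tensor R k m)) N (a : 'I_N -> R) (F : 'I_N -> tensor R k m) :
  (forall i, in_span W (F i)) -> in_span W (fun t => \sum_(i < N) a i * F i t).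
Proof.
move=> H; have [c Hc] := fin_all_exists H.
exists (fun l => \sum_(i < N) a i * c i l).
apply: functional_extensionality => t.
under eq_bigr => i _ do rewrite (Hc i) big_distrr /=.
rewrite exchange_big /=; apply: eq_bigr => l _.
by rewrite big_distrl /=; apply: eq_bigr => i _; rewrite mulrA.
Qed.

Lemma in_span0 k m (W : seq (tensor R k m)) : in_span W (fun _ => 0).
Proof.
exists (fun _ => 0); apply: functional_extensionality => t.
by rewrite big1 // => i _; rewrite mul0r.
Qed.

Lemma in_span_scale k m (W : seq (tensor R k m)) c T :
  in_span W T -> in_span W (fun t => c * T t).
Proof.
case=> e ->; exists (fun i => c * e i); apply: functional_extensionality => t.
by rewrite /= big_distrr; apply: eq_bigr => i _ /=; rewrite mulrA.
Qed.

Lemma in_span_ext k m (W : seq (tensor R k m)) T T' :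
  (forall t, T t = T' t) -> in_span W T -> in_span W T'.
Proof. by move=> H; have -> : T' = T by apply: functional_extensionality => t; rewrite H. Qed.

Lemma card_sum m (P : pred 'I_m) : #|P| = (\sum_(i < m) (P i : nat))%N.
Proof.
rewrite -sum1_card big_mkcond /=; apply: eq_bigr => i _.
by rewrite unfold_in; case: (P i).
Qed.

Definition K n m (s : {ffun 'I_m -> 'I_(n+n)}) : nat := (\sum_(i < m) ((n <= s i)%N : nat))%N.

Lemma blk_max n (a : 'I_(n+n)) : (blk a == ord_max) = (n <= a)%N.
Proof. by rewrite /blk; case: ltnP. Qed.

Lemma clone_binform n m (c : nat -> R) (s : {ffun 'I_m -> 'I_(n+n)}) :
  clone n (binform m c) s = c (K s) / ('C(m, K s))%:R.
Proof.
rewrite /clone /binform /=.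
suff -> : #|[pred i | [ffun i => blk (s i)] i == ord_max]| = K s by [].
rewrite card_sum /K; apply: eq_bigr => i _; by rewrite /= ffunE blk_max.
Qed.

Lemma K_le n m (s : {ffun 'I_m -> 'I_(n+n)}) : (K s <= m)%N.
Proof.
rewrite /K; rewrite -[X in (_ <= X)%N]card_ord -sum1_card.
by apply: leq_sum => i _; case: (n <= s i)%N.
Qed.

Lemma drop_lift k D (t : {ffun 'I_D -> 'I_k}) j i : drop_idx t j i = t (lift j i).
Proof. by rewrite /drop_idx ffunE; congr (t _); apply: val_inj. Qed.

Lemma K_drop n D (t : {ffun 'I_D -> 'I_(n+n)}) j :
  (K (drop_idx t j) + (n <= t j) = K t)%N.
Proof.
rewrite /K (bigD1_ord j) //= addnC; congr (_ + _)%N.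
by apply: eq_bigr => i _; rewrite drop_lift.
Qed.


Lemma in_mod_restrE n d (C : tensor R (n+n) d) W T :
  in_mod C W T -> in_mod (restrE C) (map (@restrE R n d.-1) W) (restrE T).
Proof.
case=> M [HM ->]; exists (fun j a => restrE (M j (lshift n a))); split.
  move=> j a; case: (HM j (lshift n a)) => c Hc.
  rewrite /in_span size_map; exists c; apply: functional_extensionality => t.
  rewrite Hc /restrE; apply: eq_bigr => i _; by rewrite (nth_map (fun _ => 0)).
apply: functional_extensionality => t; rewrite /restrE /=; congr (_ + _).
apply: eq_bigr => j _; rewrite ffunE; congr (M j _ _).
by apply/ffunP => i; rewrite !ffunE.
Qed.

Lemma in_mod_restrEE n d (C : tensor R (n+n) d) W T :
  in_mod C W T -> in_mod (restrEE C) (map (@restrEE R n d.-1) W) (restrEE T).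
Proof.
case=> M [HM ->]; exists (fun j a => restrEE (M j (rshift n a))); split.
  move=> j a; case: (HM j (rshift n a)) => c Hc.
  rewrite /in_span size_map; exists c; apply: functional_extensionality => t.
  rewrite Hc /restrEE; apply: eq_bigr => i _; by rewrite (nth_map (fun _ => 0)).
apply: functional_extensionality => t; rewrite /restrEE /=; congr (_ + _).
apply: eq_bigr => j _; rewrite ffunE; congr (M j _ _).
by apply/ffunP => i; rewrite !ffunE.
Qed.

Lemma in_mod_scale k d (C : tensor R k d) W T c :
  in_mod C W T -> in_mod (fun t => c * C t) W (fun t => c * T t).
Proof.
case=> M [HM ->]; exists (fun j a => fun s => c * M j a s); split.
  by move=> j a; apply: in_span_scale.
apply: functional_extensionality => t /=; by rewrite mulrDr big_distrr.
Qed.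

Lemma decomp_scale k m (T : tensor R k m.+1) c :
  decomposable T -> decomposable (fun t => c * T t).
Proof.
case=> v ->; exists (fun i a => if i == ord0 then c * v i a else v i a).
apply: functional_extensionality => t /=.
rewrite !big_ord_recl eqxx mulrA; congr (_ * _).
Qed.

Lemma span_phi n e (W : seq (tensor R (n+n) e)) (phi : nat -> R) :
  phi 0%N = 0 -> phi e = 0 ->
  (forall j, (1 <= j <= e - 1)%N -> in_span W (clone n (binform e (fun i => (i == j)%:R)))) ->
  in_span W (fun s => phi (K s)).
Proof.
move=> h0 he H.
pose F (j : 'I_e.+1) : tensor R (n+n) e :=
  if (1 <= j <= e - 1)%N then clone n (binform e (fun i => (i == j)%:R)) else (fun _ => 0).
apply: (@in_span_ext _ _ _ (fun s => \sum_(j < e.+1) (phi j * ('C(e, j))%:R) * F j s)).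
  move=> s.
  have Hk : (K s < e.+1)%N by rewrite ltnS K_le.
  rewrite (bigD1 (Ordinal Hk)) //= big1 ?addr0; last first.
    move=> j /eqP Hj; rewrite /F; case: ifP => _; last by rewrite mulr0.
    rewrite clone_binform; case: eqP => [E|_]; last by rewrite mul0r mulr0.
    by exfalso; apply: Hj; apply: val_inj; rewrite /= E.
  rewrite /F /=; case: ifP => Hc.
    rewrite clone_binform eqxx mul1r -mulrA mulfV ?mulr1 //.
    by rewrite pnatr_eq0 -lt0n bin_gt0 K_le.
  rewrite mulr0; move: Hc (K_le s); case: (K s) => [|k] Hc Hle; first by rewrite h0.
  have -> : k.+1 = e by move: Hc Hle; lia.
  by rewrite he.
apply: in_span_sum => j; rewrite /F; case: ifP => Hj; first exact: H.
exact: in_span0.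
Qed.


Lemma sum_if N (b : 'I_N -> bool) (A B : R) :
  \sum_(i < N) (if b i then B else A) = A *+ N + (B - A) *+ (\sum_(i < N) (b i : nat))%N.
Proof.
rewrite -sumrMnr.
have -> : A *+ N = \sum_(i < N) A by rewrite sumr_const card_ord.
rewrite -big_split; apply: eq_bigr => i _ /=; case: (b i) => /=.
  by rewrite mulr1n addrC subrK.
by rewrite mulr0n addr0.
Qed.

Lemma K_lshift n m (t : {ffun 'I_m -> 'I_n}) : K [ffun i => lshift n (t i)] = 0%N.
Proof. by rewrite /K big1 // => i _; rewrite ffunE /= leqNgt ltn_ord. Qed.

Lemma K_rshift n m (t : {ffun 'I_m -> 'I_n}) : K [ffun i => rshift n (t i)] = m.
Proof.
rewrite /K (eq_bigr (fun _ => 1%N)); last by move=> i _; rewrite ffunE /= leq_addr.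
by rewrite sum_nat_const card_ord muln1.
Qed.

Lemma prod_const_ffun k m (a : 'I_k) (v : 'I_k -> R) :
  \prod_(i < m) v ([ffun _ => a] i) = v a ^+ m.
Proof.
rewrite (eq_bigr (fun _ => v a)); last by move=> i _; rewrite ffunE.
by rewrite prodr_const card_ord.
Qed.

End H.

Unset Implicit Arguments.

Theorem proposition4p5 (R : realType) (d n : nat)
    (W : seq (tensor R (n + n) d.-1)) :
  (4 <= d)%N -> ~~ odd d -> (0 < n)%N ->
  (forall j : nat, (1 <= j <= d - 2)%N ->
     in_span W (clone n (binform d.-1 (fun i => (i == j)%:R)))) ->
  (forall T : tensor R n d, in_mod (ones n d) (map (@restrE R n d.-1) W) T ->
     decomposable T -> T = ones n d) ->
  (forall T : tensor R n d, in_mod (ones n d) (map (@restrEE R n d.-1) W) T ->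
     decomposable T -> T = ones n d) ->
  let C := binform d (fun i => if i == 0%N then 1 else if i == d then -3 else 0) in
  exists r s : nat,
    is_minrk (in_mod (clone n C) W) r /\
    is_minsrk (in_mod (clone n C) W) s /\ (r < s)%N.
Proof.
case: d W => [|e] W; first by [].
move=> Hd Hev Hn H3 H4e H4eps C.
have a0 : 'I_n := Ordinal Hn.
pose Cv (m : nat) : R := if m == 0%N then 1 else if m == e.+1 then -3 else 0.
have HC : forall t, clone n C t = Cv (K t).
  move=> t; rewrite /C clone_binform /Cv.
  case: eqP => [->|_]; first by rewrite bin0 divr1.
  case: eqP => [->|_]; first by rewrite binn divr1.
  by rewrite mul0r.
have low : forall T lam (v : 'I_(n+n) -> R), in_mod (clone n C) W T ->
    (forall t, T t = lam * \prod_(i < e.+1) v (t i)) -> False.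
  move=> T lam v HT HTe.
  have hE := in_mod_restrE HT.
  have E1 : restrE (clone n C) = ones n e.+1.
    by apply: functional_extensionality => t; rewrite /restrE HC K_lshift.
  rewrite E1 in hE.
  have D1 : restrE T = (fun t => lam * \prod_(i < e.+1) v (lshift n (t i))).
    apply: functional_extensionality => t; rewrite /restrE HTe; congr (_ * _).
    by apply: eq_bigr => i _; rewrite ffunE.
  have dec1 : decomposable (restrE T).
    rewrite D1; apply: (decomp_scale (T := fun t => \prod_(i < e.+1) v (lshift n (t i)))).
    by exists (fun _ a => v (lshift n a)).
  have := H4e _ hE dec1.
  move/(congr1 (fun f => f [ffun _ => a0])); rewrite D1 /ones /=; under eq_bigr do rewrite ffunE; rewrite prodr_const card_ord => Ep.
  have hEE := in_mod_restrEE HT.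
  have E2 : restrEE (clone n C) = (fun t => -3).
    apply: functional_extensionality => t; rewrite /restrEE HC K_rshift /Cv /=.
    by rewrite eqxx.
  rewrite E2 in hEE.
  have hEE' := in_mod_scale (-3)^-1 hEE.
  have E3 : (fun t : {ffun 'I_e.+1 -> 'I_n} => (-3 : R)^-1 * -3) = ones n e.+1 :> tensor R n e.+1.
    by apply: functional_extensionality => t; rewrite mulVf //; apply/eqP; lra.
  rewrite E3 in hEE'.
  have := H4eps _ hEE'.
  have dec2 : forall X : tensor R n e.+1, (forall t, X t = ((-3)^-1 * lam) * \prod_(i < e.+1) v (rshift n (t i))) -> decomposable X.
    move=> X HX; have -> : X = (fun t => ((-3)^-1 * lam) * \prod_(i < e.+1) v (rshift n (t i))).
      by apply: functional_extensionality => t; rewrite HX.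
    apply: (decomp_scale (T := fun t => \prod_(i < e.+1) v (rshift n (t i)))).
    by exists (fun _ a => v (rshift n a)).
  have D2 : forall t, (-3)^-1 * restrEE T t = ((-3)^-1 * lam) * \prod_(i < e.+1) v (rshift n (t i)).
    move=> t; rewrite /restrEE HTe -mulrA; congr (_ * (_ * _)).
    by apply: eq_bigr => i _; rewrite ffunE.
  move/(_ (dec2 _ D2)).
  move/(congr1 (fun f => f [ffun _ => a0])); rewrite /= D2 /ones /=; under eq_bigr do rewrite ffunE; rewrite prodr_const card_ord => Eq.
  have p0 := exprn_even_ge0 (v (lshift n a0)) Hev.
  have q0 := exprn_even_ge0 (v (rshift n a0)) Hev.
  move: Ep Eq p0 q0; set p := _ ^+ _; set q := _ ^+ _ => Ep Eq p0 q0.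
  have h3 : (-3 : R) != 0 by apply/eqP; lra.
  have Eq' : lam * q = -3 by move: Eq; rewrite -mulrA => /(canRL (mulVKf h3)); rewrite mulr1.
  have hq : q * (lam * p) = p * (lam * q) by ring.
  rewrite Ep Eq' in hq.
  have hp : p = 0 by lra.
  by move: Ep; rewrite hp mulr0 => /eqP; rewrite eq_sym oner_eq0.
have e3 : (3 <= e)%N by [].
have H3' : forall j, (1 <= j <= e - 1)%N -> in_span W (clone n (binform e (fun i => (i == j)%:R))).
  by move=> j hj; apply: H3; lia.
have lf : forall i : 'I_e, (lift ord0 i == ord0) = false.
  by move=> i; apply/negbTE; rewrite eq_sym neq_lift.
exists 1%N, 2%N; split; [|split; last by []].
- split.
  + pose al : R := -3 / e%:R.
    pose be : R := 1 / e%:R.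
    pose T1v (b : bool) : R := if b then -3 else 1.
    pose phi1 (b : bool) (k : nat) : R := if b then be * (k == e.-1)%:R else al * (k == 1%N)%:R.
    pose phi0 (b : bool) (k : nat) : R := T1v b - Cv (k + b)%N - al * (k + b == 1)%N%:R * (e%:R - k%:R)
       - be * (k + b == e)%N%:R * k%:R.
    have ne0 : (e%:R : R) != 0 by rewrite pnatr_eq0; apply/eqP; lia.
    have phi1_val : forall (b : bool) k, phi1 b k = if b then be * (k + b == e)%N%:R else al * (k + b == 1)%N%:R.
      by move=> [] k /=; congr (_ * (_)%:R); apply/eqP/eqP; lia.
    exists (fun t : {ffun 'I_e.+1 -> 'I_(n+n)} => T1v (n <= t ord0)%N); split.
      exists (fun (j : 'I_e.+1) (a : 'I_(n+n)) (s : {ffun 'I_e -> 'I_(n+n)}) => if j == ord0 then phi0 (n <= a)%N (K s) else phi1 (n <= a)%N (K s)).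
      split.
        { move=> j a; case: (j == ord0); (apply: span_phi; last exact: H3'); case: (n <= a)%N.
        all: try rewrite /phi0; try rewrite /phi1; try rewrite /T1v; try rewrite /Cv; rewrite /=.
        all: repeat (case: eqP => ?; try (exfalso; lia)); try rewrite /al; try rewrite /be; rewrite /= ?mulr0 ?mul0r ?mulr1 ?subr0; field; rewrite ?ne0 //.
        }
      apply: functional_extensionality => t /=.
      rewrite HC big_ord_recl eqxx.
      have Kd' : forall j, (@K n e (drop_idx t j) + (n <= t j) = K t)%N by move=> j; exact: K_drop.
      under eq_bigr => i _ do rewrite /= phi1_val Kd'.
      rewrite sum_if.
      have Kd := K_drop t ord0.
      set b0 := (n <= t ord0)%N in Kd *.
      set S := (\sum_(i < e) (n <= t (lift ord0 i))%N)%N.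
      have HK : K t = (S + b0)%N by rewrite /K big_ord_recl addnC.
      have HKd : K (drop_idx t ord0) = S by apply/eqP; rewrite -(eqn_add2r b0) Kd HK.
      rewrite HKd HK /phi0 /T1v; ring.
    exists (fun _ i a => if (i == ord0) && (n <= a)%N then -3 else 1).
    apply: functional_extensionality => t.
    rewrite big_ord1 big_ord_recl eqxx /= big1 ?mulr1; first by case: (n <= t ord0)%N.
    by move=> i _.
  + move=> T s HT [v Hv]; case: s v Hv => [|s] v Hv //; exfalso.
    apply: (low T 0 (fun _ => 0)) => // t; by rewrite Hv big_ord0 mul0r.
- pose lam (j : 'I_2) : R := if j == ord0 then 1 else -3.
  pose v (j : 'I_2) (a : 'I_(n+n)) : R :=
    if j == ord0 then (if (a < n)%N then 1 else 0) else (if (n <= a)%N then 1 else 0).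
  pose Ts := fun t : {ffun 'I_e.+1 -> 'I_(n+n)} => \sum_(j < 2) lam j * \prod_(i < e.+1) v j (t i).
  split.
    exists Ts; split; [|split; last by exists lam, v].
      exists (fun _ _ _ => 0); split; first by move=> *; exact: in_span0.
      apply: functional_extensionality => t; rewrite big1 ?addr0 // HC.
      rewrite /Ts big_ord_recl big_ord1 /lam /v /=.
      case: (pickP (fun i : 'I_e.+1 => n <= t i)%N) => [i0 Hi0 | Hno].
        rewrite [X in 1 * X](bigD1 i0) //= ltnNge Hi0 mul0r.
        case: (pickP (fun i : 'I_e.+1 => t i < n)%N) => [i1 Hi1 | Hall].
          rewrite [X in -3 * X](bigD1 i1) //= leqNgt Hi1 mul0r.
          have k0 := K_drop t i0; have k1 := K_drop t i1; have kl := K_le (drop_idx t i1).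
          move: k0 k1 kl; rewrite Hi0 (leqNgt n) Hi1 /= => k0 k1 kl.
          rewrite /Cv; case: eqP => h; first by exfalso; lia.
          case: eqP => h'; first by exfalso; lia.
          by rewrite !mulr0 addr0.
        rewrite [X in -3 * X]big1; last by move=> i _; rewrite leqNgt Hall.
        have -> : K t = e.+1.
          rewrite /K (eq_bigr (fun _ => 1%N)); last by move=> i _; rewrite leqNgt Hall.
          by rewrite sum_nat_const card_ord muln1.
        rewrite mulr0 add0r mulr1 /Cv /=; by case: eqP.
      rewrite [X in 1 * X]big1; last by move=> i _; rewrite ltnNge Hno.
      rewrite [X in -3 * X]big_ord_recl /= Hno mul0r mulr0 addr0 mulr1.
      have -> : K t = 0%N by rewrite /K big1 // => i _; rewrite Hno.
      by [].
    move=> s t; rewrite /Ts; apply: eq_bigr => j _; congr (_ * _).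
    rewrite [RHS](reindex_inj (perm_inj (s:=s))) /=.
    by apply: eq_bigr => i _; rewrite ffunE.
  move=> T s HT _ [lm [w Hw]]; case: s lm w Hw => [|[|s]] lm w Hw //; exfalso.
    apply: (low T 0 (fun _ => 0)) => // t; by rewrite Hw big_ord0 mul0r.
  apply: (low T (lm ord0) (w ord0)) => // t; by rewrite Hw big_ord1.
Qed.
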